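(* Let $\mathcal D$ be a database schema and let $\{P_1,\ldots,P_k\}\subseteq\mathcal D$ be the maximal set of relation symbols of $\mathcal D$ such that the relation for each of $P_1,\ldots,P_k$ is required to be set valued in all instances $D$ over $\mathcal D$. Given CQ queries $Q_1,Q_2$ over $\mathcal D$, let $Q_1'$ (resp. $Q_2'$) be obtained from $Q_1$ (resp. $Q_2$) by removing all duplicate subgoals whose predicates correspond to $P_1,\ldots,P_k$ (keeping one copy of each). Then $Q_1(D,B)=Q_2(D,B)$ as bags for every bag-valued instance $D$ of $\mathcal D$ in which $P_1,\ldots,P_k$ are set valued if and only if $Q_1'$ and $Q_2'$ are isomorphic.
   Context: A database instance over $\mathcal D$ assigns to each relation symbol a finite bag (multiset) of tuples; a relation is set valued if every tuple has multiplicity $1$. A CQ query is $Q(\bar X):-p_1(\bar X_1),\dots,p_n(\bar X_n)$, $n\ge1$, with relational atoms (subgoals, possibly repeated) over $\mathcal D$ and every head variable occurring in the body. Under bag semantics, each assignment $\gamma$ of the variables to constants such that every $\gamma(\bar X_i)$ is a tuple of the relation $P_i$ of $p_i$ contributes $\prod_i m_i$ copies of $\gamma(\bar X)$ to the bag $Q(D,B)$, where $m_i$ is the multiplicity of $\gamma(\bar X_i)$ in $P_i$. Two CQ queries are isomorphic if a bijective renaming of variables maps one onto the other (head onto head, body onto body as multisets of atoms). *)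

(* Defs.v *)
From mathcomp Require Import all_boot.
Set Implicit Arguments. Unset Strict Implicit. Unset Printing Implicit Defensive.

(* Variables and constants are both represented by natural numbers
   (an infinite supply of each). *)

Section CQ.
Variable Sym : eqType.
Variable ar : Sym -> nat.

Definition atom := (Sym * seq nat)%type.
Definition asym (a : atom) : Sym := a.1.
Definition aargs (a : atom) : seq nat := a.2.

Definition cq := (seq nat * seq atom)%type.
Definition qhead (Q : cq) : seq nat := Q.1.
Definition qbody (Q : cq) : seq atom := Q.2.

Definition body_vars (Q : cq) : seq nat := undup (flatten (map aargs (qbody Q))).

Definition wf_cq (Q : cq) : Prop :=
  [/\ qbody Q != [::],
      all (fun a => size (aargs a) == ar (asym a)) (qbody Q)
    & all (fun x => x \in body_vars Q) (qhead Q)].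

(* A database instance: each relation symbol is assigned a finite bag of
   tuples, represented as a finite sequence (multiplicity = number of
   occurrences). *)
Definition instance := Sym -> seq (seq nat).

Definition wf_instance (D : instance) : Prop :=
  forall p, all (fun t => size t == ar p) (D p).

Definition set_valued_on (P : seq Sym) (D : instance) : Prop :=
  forall p, p \in P -> uniq (D p).

Fixpoint allseqs (n : nat) (l : seq nat) : seq (seq nat) :=
  match n with
  | 0 => [:: [::]]
  | n'.+1 => [seq x :: s | x <- l, s <- allseqs n' l]
  end.

Definition adom (D : instance) (Q : cq) : seq nat :=
  undup (flatten (flatten [seq D (asym a) | a <- qbody Q])).

Definition asgn (Q : cq) (s : seq nat) (x : nat) : nat :=
  nth 0 s (index x (body_vars Q)).

Definition weight (D : instance) (Q : cq) (g : nat -> nat) : nat :=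
  \prod_(a <- qbody Q) count_mem (map g (aargs a)) (D (asym a)).

(* Multiplicity of tuple t in the bag Q(D,B): sum over all assignments of the
   query variables (assignments taking a value outside the active domain
   contribute 0, so only those into the active domain are enumerated). *)
Definition bag_mult (Q : cq) (D : instance) (t : seq nat) : nat :=
  \sum_(s <- allseqs (size (body_vars Q)) (adom D Q))
     (map (asgn Q s) (qhead Q) == t) * weight D Q (asgn Q s).

Fixpoint dedup_on (P : seq Sym) (b : seq atom) : seq atom :=
  match b with
  | [::] => [::]
  | a :: b' => if (asym a \in P) && (a \in b') then dedup_on P b'
               else a :: dedup_on P b'
  end.

Definition dedup_cq (P : seq Sym) (Q : cq) : cq := (qhead Q, dedup_on P (qbody Q)).

Definition rename (f : nat -> nat) (a : atom) : atom := (asym a, map f (aargs a)).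

Definition cq_iso (Q1 Q2 : cq) : Prop :=
  exists f : nat -> nat, [/\ bijective f,
    map f (qhead Q1) = qhead Q2
  & perm_eq (map (rename f) (qbody Q1)) (qbody Q2)].

End CQ.

(* Main.v *)
Require Import Defs.
From mathcomp Require Import all_boot.
From Stdlib Require Import FunctionalExtensionality.
Set Implicit Arguments. Unset Strict Implicit. Unset Printing Implicit Defensive.

Definition upd (g : nat -> nat) (v x : nat) : nat -> nat :=
  fun y => if y == v then x else g y.

Fixpoint SS (A V : seq nat) (G : (nat -> nat) -> nat) : nat :=
  match V with
  | [::] => G (fun _ => 0)
  | v :: V' => \sum_(x <- A) SS A V' (fun g => G (upd g v x))
  end.

Definition asg (V s : seq nat) (y : nat) := nth 0 s (index y V).

Lemma SS_allseqs A V G :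
  \sum_(s <- allseqs (size V) A) G (asg V s) = SS A V G.
Proof.
elim: V G => [|v V IH] G /=.
  by rewrite big_cons big_nil addn0.
rewrite big_allpairs_dep. apply: eq_bigr => x _. rewrite -IH; apply: eq_bigr => s _.
congr G; apply: functional_extensionality => y; rewrite /asg /upd /=.
by rewrite eq_sym; case: (y == v).
Qed.

Lemma SS_ext A V G G' :
  (forall g, all (fun y => g y \in A) V -> G g = G' g) -> SS A V G = SS A V G'.
Proof.
elim: V G G' => [|v V IH] G G' H /=; first by apply: H.
apply: eq_big_seq => x xA; apply: IH => g Hg; apply: H.
rewrite /= /upd eqxx xA /=; apply/allP => y yV.
by case: eqP => // _; apply: (allP Hg).
Qed.

Lemma SS_sum (I : Type) (r : seq I) A V (F : I -> (nat -> nat) -> nat) :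
  SS A V (fun g => \sum_(i <- r) F i g) = \sum_(i <- r) SS A V (F i).
Proof.
elim: V F => [|v V IH] F //=.
under eq_bigr => x _ do rewrite IH.
by rewrite exchange_big.
Qed.

Lemma SS_scale c A V G : SS A V (fun g => c * G g) = c * SS A V G.
Proof.
elim: V G => [|v V IH] G //=.
under eq_bigr => x _ do rewrite IH.
by rewrite big_distrr.
Qed.

Lemma SS_zero A V G : (forall g, all (fun y => g y \in A) V -> G g = 0) -> SS A V G = 0.
Proof.
move=> H; rewrite (SS_ext (G' := fun g => 0 * G g)); last by move=> g /H ->.
by rewrite SS_scale.
Qed.

Lemma upd_comm g u v x y : u != v -> upd (upd g v y) u x = upd (upd g u x) v y.
Proof.
move=> uv; apply: functional_extensionality => z; rewrite /upd.
case: (eqVneq z u) => [->|]; last by [].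
by rewrite (negbTE uv).
Qed.

Lemma SS_move A W1 v W2 G : v \notin W1 ->
  SS A (W1 ++ v :: W2) G = SS A (v :: W1 ++ W2) G.
Proof.
elim: W1 G => [|u W1 IH] G //=.
rewrite inE negb_or => /andP [vu vW1].
under eq_bigr => x _ do rewrite IH //=.
rewrite exchange_big /=; apply: eq_bigr => y _; apply: eq_bigr => x _.
congr SS; apply: functional_extensionality => g.
by rewrite upd_comm // eq_sym.
Qed.

Lemma SS_perm A V W G : uniq V -> perm_eq V W -> SS A V G = SS A W G.
Proof.
elim: V W G => [|v V IH] W G.
  by move=> _; rewrite perm_sym => /perm_nilP ->.
move=> /= /andP [vV uV] pVW.
have vW : v \in W by rewrite -(perm_mem pVW) mem_head.
case/splitPr: vW pVW => W1 W2 pVW.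
have uW : uniq (W1 ++ v :: W2) by rewrite -(perm_uniq pVW) /= vV uV.
have vW1 : v \notin W1.
  by move: uW; rewrite cat_uniq /= => /and3P [_ /norP [/negP H _] _]; apply/negP.
rewrite SS_move //=; apply: eq_bigr => x _; apply: IH => //.
rewrite -(perm_cons v); apply: (perm_trans pVW).
by rewrite -cat1s perm_catCA.
Qed.

Lemma SS_rename A V G (f finv : nat -> nat) :
  cancel f finv -> cancel finv f ->
  SS A (map f V) G = SS A V (fun g => G (g \o finv)).
Proof.
move=> fK fK'; elim: V G => [|v V IH] G //=.
apply: eq_bigr => x _; rewrite IH; congr SS; apply: functional_extensionality => g.
congr G; apply: functional_extensionality => z; rewrite /upd /=.
case: (eqVneq z (f v)) => [->|zv]; first by rewrite fK eqxx.
case: eqP => // E; case/eqP: zv; by rewrite -E fK'.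
Qed.

Lemma sum_sub_dom (A B : seq nat) (F : nat -> nat) : uniq A -> uniq B -> {subset A <= B} ->
  (forall x, x \notin A -> F x = 0) -> \sum_(x <- B) F x = \sum_(x <- A) F x.
Proof.
move=> uA uB sAB F0.
rewrite (bigID (fun x => x \in A)) /= [X in _ + X]big1 ?addn0; last by move=> x /F0.
rewrite -big_filter; apply: perm_big; apply: uniq_perm; first exact: filter_uniq.
  done.
by move=> x; rewrite mem_filter; case xA: (x \in A) => //=; rewrite (sAB _ xA).
Qed.

Lemma SS_sub A B V G : uniq A -> uniq B -> {subset A <= B} -> uniq V ->
  (forall g, ~~ all (fun y => g y \in A) V -> G g = 0) -> SS B V G = SS A V G.
Proof.
move=> uA uB sAB; elim: V G => [|v V IH] G //= /andP [vV uV] G0.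
have ->: \sum_(x <- B) SS B V (fun g => G (upd g v x)) =
         \sum_(x <- B) SS A V (fun g => G (upd g v x)).
  apply: eq_bigr => x _; apply: IH => // g Hg; apply: G0.
  rewrite /= negb_and; apply/orP; right.
  move: Hg; apply: contra => /allP H; apply/allP => y yV.
  have := H y yV; rewrite /upd; case: eqP => // E; by move: vV; rewrite -E yV.
apply: sum_sub_dom => // x xA; apply: SS_zero => g _; apply: G0.
by rewrite /= /upd eqxx (negbTE xA).
Qed.

Lemma SS_prod A V (f : nat -> nat -> nat) : uniq V ->
  SS A V (fun g => \prod_(y <- V) f y (g y)) = \prod_(y <- V) \sum_(x <- A) f y x.
Proof.
elim: V => [|v V IH] /=; first by rewrite !big_nil.
move=> /andP [vV uV]; rewrite big_cons big_distrl /=; apply: eq_bigr => x _.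
rewrite -(IH uV) -SS_scale; congr SS; apply: functional_extensionality => g.
rewrite big_cons /upd eqxx; congr (_ * _); apply: eq_big_seq => y yV.
by case: eqP => // E; move: vV; rewrite -E yV.
Qed.

Lemma sum_enc M N (F : nat -> nat) :
  \sum_(c <- iota 0 (M * N)) F c = \sum_(x <- iota 0 M) \sum_(j <- iota 0 N) F (x + M * j).
Proof.
elim: N => [|N IH]; first by rewrite muln0 big_nil big1 // => x _; rewrite big_nil.
have E : iota (M * N) M = map (addn (M * N)) (iota 0 M) by rewrite -iotaDl addn0.
have E2 : iota 0 N.+1 = iota 0 N ++ [:: N] by rewrite -addn1 iotaD.
rewrite mulnS addnC iotaD big_cat IH add0n E big_map E2.
under [RHS]eq_bigr => x _ do rewrite big_cat big_seq1.
rewrite big_split /=; congr (_ + _); apply: eq_bigr => x _; by rewrite addnC.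
Qed.

Lemma SS_enc M N V G :
  SS (iota 0 (M * N)) V G =
  SS (iota 0 M) V (fun h => SS (iota 0 N) V (fun i => G (fun y => h y + M * i y))).
Proof.
elim: V G => [|v V IH] G /=.
  by congr G; apply: functional_extensionality => y; rewrite muln0.
rewrite sum_enc; apply: eq_bigr => x _.
rewrite SS_sum; apply: eq_bigr => j _; rewrite IH.
congr SS; apply: functional_extensionality => h.
congr SS; apply: functional_extensionality => i.
congr G; apply: functional_extensionality => y.
by rewrite /upd; case: eqP.
Qed.

Fixpoint mon (vs e : seq nat) : nat :=
  match vs, e with
  | x :: vs', j :: e' => x ^ j * mon vs' e'
  | _, _ => 1
  end.

Lemma digit x c0 d0 S1 S2 : c0 < x -> d0 < x -> c0 + x * S1 = d0 + x * S2 ->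
  c0 = d0 /\ S1 = S2.
Proof.
move=> cx dx E.
have E0 : c0 = d0.
  have := congr1 (modn^~ x) E.
  by rewrite ![_ + x * _]addnC ![x * _]mulnC !modnMDl !modn_small.
split=> //; move: E; rewrite E0 => /addnI /eqP.
by rewrite eqn_pmul2l ?(leq_ltn_trans _ dx) // => /eqP.
Qed.

Lemma coef_eq J (c d : nat -> nat) B :
  (forall j, c j <= B) -> (forall j, d j <= B) ->
  (forall x, B < x -> \sum_(j < J) c j * x ^ j = \sum_(j < J) d j * x ^ j) ->
  forall j, j < J -> c j = d j.
Proof.
elim: J c d => [|J IH] c d cB dB H j //.
have H' : forall x, B < x ->
  c 0 = d 0 /\ \sum_(i < J) c i.+1 * x ^ i = \sum_(i < J) d i.+1 * x ^ i.
  move=> x Bx; apply: digit; try exact: (leq_ltn_trans _ Bx).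
  have := H x Bx; rewrite !big_ord_recl !expn0 !muln1 /=.
  under eq_bigr => i _ do rewrite /bump /= add1n expnS mulnCA.
  under [in RHS]eq_bigr => i _ do rewrite /bump /= add1n expnS mulnCA.
  by rewrite -!big_distrr.
case: j => [|j] jJ; first by case: (H' B.+1 (ltnSn B)).
apply: (IH (fun i => c i.+1) (fun i => d i.+1)) => //.
by move=> x Bx; case: (H' x Bx).
Qed.

Definition Lj (L : seq (seq nat)) j := [seq behead e | e <- L & head 0 e == j].

Lemma count_Lj L j e' : all (fun e => 0 < size e) L ->
  count_mem (j :: e') L = count_mem e' (Lj L j).
Proof.
elim: L => [|e L IH] //= /andP [se aL].
rewrite IH //; case: e se => [|j0 e0] //= _.
rewrite /Lj /=; case: (eqVneq j0 j) => [->|ne] /=.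
  by rewrite eqseq_cons eqxx.
by rewrite eqseq_cons (negbTE ne).
Qed.

Lemma sum_pred1_ord J a (F : nat -> nat) : a < J ->
  \sum_(j < J) (a == j) * F j = F a.
Proof.
move=> aJ; rewrite (bigD1 (Ordinal aJ)) //= eqxx mul1n big1 ?addn0 // => i.
by rewrite -val_eqE /= eq_sym => /negbTE ->.
Qed.

Lemma sum_group L J vs' x :
  all (fun e => 0 < size e) L -> all (fun e => head 0 e < J) L ->
  \sum_(e <- L) mon (x :: vs') e =
  \sum_(j < J) (\sum_(e' <- Lj L j) mon vs' e') * x ^ j.
Proof.
move=> sL hL.
have -> : \sum_(e <- L) mon (x :: vs') e =
   \sum_(e <- L) \sum_(j < J) (head 0 e == j) * (x ^ j * mon vs' (behead e)).
  apply: eq_big_seq => e eL; rewrite (@sum_pred1_ord J (head 0 e) (fun j => x ^ j * mon vs' (behead e))); last exact: (allP hL).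
  by have := allP sL e eL; case: e {eL} => [|j e].
rewrite exchange_big /=; apply: eq_bigr => j _.
rewrite /Lj big_map big_filter big_distrl /= [RHS]big_mkcond /=; apply: eq_bigr => e _.
by case: (head 0 e == j); rewrite ?mul1n ?mul0n // mulnC.
Qed.

Lemma poly_count k (L1 L2 : seq (seq nat)) :
  all (fun e => size e == k) L1 -> all (fun e => size e == k) L2 ->
  (forall vs, size vs = k -> all (fun x => 0 < x) vs ->
     \sum_(e <- L1) mon vs e = \sum_(e <- L2) mon vs e) ->
  forall e, count_mem e L1 = count_mem e L2.
Proof.
elim: k L1 L2 => [|k IH] L1 L2 s1 s2 H.
  have cnt : forall L, all (fun e => size e == 0) L ->
      forall e, count_mem e L = (e == [::]) * \sum_(e <- L) mon [::] e.
    elim=> [|e0 L IHL] /=; first by move=> ? ?; rewrite big_nil muln0.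
    move=> /andP [/eqP/size0nil -> aL] e; rewrite big_cons IHL // mulnDr /=.
    by rewrite muln1 eq_sym.
  by move=> e; rewrite !cnt // H.
pose J := (\max_(e <- L1 ++ L2) head 0 e).+1.
have hJ : forall L : seq (seq nat), {subset L <= L1 ++ L2} -> all (fun e => head 0 e < J) L.
  move=> L sL; apply/allP => e eL; rewrite ltnS.
  by apply: (@leq_bigmax_seq _ (L1 ++ L2) predT (fun e => head 0 e) e (sL e eL)).
have nz : forall L : seq (seq nat), all (fun e => size e == k.+1) L -> all (fun e => 0 < size e) L.
  move=> L aL; apply/allP => e eL; by rewrite (eqP (allP aL e eL)).
have sLj : forall (L : seq (seq nat)) j, all (fun e => size e == k.+1) L -> all (fun e => size e == k) (Lj L j).
  move=> L j /allP aL; apply/allP => e'; rewrite /Lj => /mapP [e].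
  by rewrite mem_filter => /andP [_ /aL /eqP se] ->; rewrite size_behead se.
have coef : forall j, j < J -> forall vs', size vs' = k -> all (fun x => 0 < x) vs' ->
   \sum_(e' <- Lj L1 j) mon vs' e' = \sum_(e' <- Lj L2 j) mon vs' e'.
  move=> j jJ vs' svs pvs.
  pose B := \sum_(e <- L1) mon vs' (behead e) + \sum_(e <- L2) mon vs' (behead e).
  have bnd : forall (L : seq (seq nat)) j, \sum_(e' <- Lj L j) mon vs' e' <= \sum_(e <- L) mon vs' (behead e).
    move=> L j'; rewrite /Lj big_map big_filter.
    by rewrite [X in _ <= X](bigID (fun e => head 0 e == j')) leq_addr.
  apply: (coef_eq (B := B) (J := J) (c := fun j => \sum_(e' <- Lj L1 j) mon vs' e')
                    (d := fun j => \sum_(e' <- Lj L2 j) mon vs' e')) => //.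
  - by move=> j'; apply: (leq_trans (bnd L1 j')); rewrite leq_addr.
  - by move=> j'; apply: (leq_trans (bnd L2 j')); rewrite leq_addl.
  move=> x Bx; rewrite -!sum_group ?nz //; last 2 first.
  + by apply: hJ => e eL; rewrite mem_cat eL orbT.
  + by apply: hJ => e eL; rewrite mem_cat eL.
  apply: H; first by rewrite /= svs.
  by rewrite /= pvs andbT (leq_ltn_trans _ Bx).
case=> [|j e'].
  have z : forall L : seq (seq nat), all (fun e => size e == k.+1) L -> count_mem [::] L = 0.
    by move=> L /allP aL; rewrite (eq_in_count (a2 := pred0)) ?count_pred0 // => e /aL /eqP /= se;
       apply/eqP; case: e se.
  by rewrite !z.
rewrite !count_Lj ?nz //.
case: (ltnP j J) => jJ.
  by apply: IH => //; [exact: sLj | exact: sLj | exact: coef].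
have e0 : forall L : seq (seq nat), {subset L <= L1 ++ L2} -> Lj L j = [::].
  move=> L sL; apply/eqP; rewrite -size_eq0 size_map size_filter.
  rewrite (eq_in_count (a2 := pred0)) ?count_pred0 // => e eL /=.
  apply/negbTE; have := allP (hJ L sL) e eL; apply: contraL => /eqP ->.
  by rewrite -leqNgt.
by rewrite !e0 // => e eL; rewrite mem_cat eL ?orbT.
Qed.

Lemma perm_from_count (T : eqType) (s1 s2 : seq T) :
  (forall x, count_mem x s1 = count_mem x s2) -> perm_eq s1 s2.
Proof. by move=> H; rewrite /perm_eq; apply/allP => x _ /=; rewrite H. Qed.

Lemma mem_allseqs n A s : (s \in allseqs n A) = (size s == n) && all (fun x => x \in A) s.
Proof.
elim: n s => [|n IH] s /=; first by rewrite inE; case: s.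
apply/allpairsPdep/idP.
  by case=> x [s' [xA s'A ->]] /=; rewrite eqSS xA; move: s'A; rewrite IH.
case: s => [|x0 s] //= /andP [sn /andP [xA sA]].
by exists x0, s; rewrite IH -eqSS sn sA.
Qed.

Lemma uniq_allseqs n A : uniq A -> uniq (allseqs n A).
Proof.
move=> uA; elim: n => [|n IH] //=.
apply: allpairs_uniq => //; by move=> [x s] [x' s'] _ _ /= [-> ->].
Qed.

Lemma count_flatten_nseq (T : eqType) (L : seq T) (f : T -> nat) u : uniq L ->
  count_mem u (flatten [seq nseq (f w) w | w <- L]) = (u \in L) * f u.
Proof.
elim: L => [|w L IH] //= /andP [wL uL].
rewrite count_cat IH // count_nseq inE /=.
by case: (eqVneq u w) => [->|uw] /=; rewrite ?(negbTE wL) ?addn0.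
Qed.

Lemma prod_bool (T : Type) (b : pred T) (L : seq T) :
  \prod_(a <- L) (b a : nat) = all b L.
Proof. elim: L => [|a L IH]; first by rewrite big_nil. by rewrite big_cons IH /= mulnb. Qed.

Lemma prod_regroup (T U : eqType) (f : U -> nat) (g : T -> U) (L : seq T) (S : seq U) :
  uniq S -> (forall y, y \in L -> g y \in S) ->
  \prod_(y <- L) f (g y) = \prod_(x <- S) f x ^ count (fun y => g y == x) L.
Proof.
move=> uS; elim: L => [|y L IH] HL.
  by rewrite big_nil big1 // => x _; rewrite expn0.
rewrite big_cons IH; last by move=> z zL; apply: HL; rewrite inE zL orbT.
under [RHS]eq_bigr => x _ do rewrite /= expnD.
rewrite big_split /=; congr (_ * _).
rewrite (bigD1_seq (g y)) ?HL ?mem_head //= eqxx expn1 big1 ?muln1 // => x /negbTE.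
by rewrite eq_sym => ->.
Qed.

Lemma sum1_size (s : seq nat) : \sum_(j <- s) 1 = size s.
Proof. by elim: s => [|x s IH]; rewrite ?big_nil ?big_cons ?IH. Qed.

Lemma sum_lt N K : K <= N -> \sum_(j <- iota 0 N) (j < K) = K.
Proof.
move=> KN; rewrite -(subnKC KN) iotaD big_cat /= [X in _ + X]big1_seq ?addn0.
  rewrite (eq_big_seq (fun _ => 1)); first by rewrite sum1_size size_iota.
  by move=> j; rewrite mem_iota => /andP [_ ->].
by move=> j /andP [_]; rewrite mem_iota add0n => /andP [/leq_gtF ->].
Qed.

Lemma sum_eq0 N : 0 < N -> \sum_(j <- iota 0 N) (j == 0) = 1.
Proof.
by case: N => // N _; rewrite /= big_cons /= big1_seq // => j /andP [_];
   rewrite mem_iota => /andP [/gtn_eqF ->].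
Qed.

Section Sym.
Variable Sym : eqType.
Variable ar : Sym -> nat.
Variable P : seq Sym.

Lemma bag_SS (Q : cq Sym) D t :
  bag_mult Q D t =
  SS (adom D Q) (body_vars Q) (fun g => (map g (qhead Q) == t) * weight D Q g).
Proof. exact: SS_allseqs. Qed.

Lemma in_body_vars (Q : cq Sym) y : (y \in body_vars Q) = has (fun a => y \in aargs a) (qbody Q).
Proof.
rewrite /body_vars mem_undup; apply/flattenP/hasP.
  by case=> l /mapP [a aB ->] yl; exists a.
by case=> a aB ya; exists (aargs a) => //; apply: map_f.
Qed.

Lemma weight_vanish (Q : cq Sym) (D : instance Sym) g :
  ~~ all (fun y => g y \in adom D Q) (body_vars Q) -> weight D Q g = 0.
Proof.
move=> /allPn [y yV ny].
move: yV; rewrite in_body_vars => /hasP [a aB ya].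
rewrite /weight (big_rem a aB) /=.
suff -> : count_mem [seq g i | i <- aargs a] (D (asym a)) = 0 by rewrite mul0n.
apply/count_memPn; apply: contra ny => H.
rewrite /adom mem_undup; apply/flattenP; exists [seq g i | i <- aargs a]; last exact: map_f.
by apply/flattenP; exists (D (asym a)) => //; apply: map_f.
Qed.

End Sym.

Lemma nth1_le (vs : seq nat) i : nth 1 vs i <= (sumn vs).+1.
Proof.
elim: vs i => [|v vs IH] [|i] //=; first by rewrite ltnW // ltnS leq_addr.
by apply: (leq_trans (IH i)); rewrite ltnS leq_addl.
Qed.

Lemma nth1_pos (vs : seq nat) i : all (fun x => 0 < x) vs -> 0 < nth 1 vs i.
Proof.
move=> H; case: (ltnP i (size vs)) => iv; first by apply: (allP H); apply: mem_nth.
by rewrite nth_default.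
Qed.

Lemma all_body (Sym : eqType) (Q : cq Sym) (p : pred nat) :
  all (fun a => all p (aargs a)) (qbody Q) = all p (body_vars Q).
Proof.
apply/allP/allP => H.
  move=> y; rewrite in_body_vars => /hasP [a aB ya]; exact: (allP (H a aB)).
by move=> a aB; apply/allP => y ya; apply: H; rewrite in_body_vars; apply/hasP; exists a.
Qed.

Section Construct.
Variable Sym : eqType.
Variable ar : Sym -> nat.
Variable P : seq Sym.
Variable R2 : cq Sym.
Variable vs : seq nat.

Definition V2 := body_vars R2.
Definition hd2 := qhead R2.
Definition B2 := qbody R2.
Definition NP2 := [seq a <- B2 | asym a \notin P].
Definition A2 := undup NP2.
Definition nn x := nth 1 vs (index x V2).
Definition mm (b : atom Sym) := nth 1 vs (size V2 + index b A2).
Definition wm (b : atom Sym) := if asym b \in P then 1 else mm b.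
Definition MM := (\max_(x <- V2) x).+1.
Definition NN := (sumn vs).+1.
Definition enc x i := x + MM * i.
Definition mul (p : Sym) (u : seq nat) : nat :=
  if ((p, map (modn^~ MM) u) \in B2) && all (fun c => c %/ MM < nn (c %% MM)) u
  then wm (p, map (modn^~ MM) u) else 0.
Definition DD : instance Sym :=
  fun p => flatten [seq nseq (mul p u) u | u <- allseqs (ar p) (iota 0 (MM * NN))].
Definition t2 := map (enc^~ 0) hd2.

Lemma lt_MM x : x \in V2 -> x < MM.
Proof. by move=> xV; rewrite ltnS; apply: (@leq_bigmax_seq _ V2 predT id x xV). Qed.

Lemma nn_le x : nn x <= NN.
Proof. exact: nth1_le. Qed.

Lemma encK1 x i : x < MM -> enc x i %% MM = x.
Proof. by move=> xM; rewrite /enc addnC mulnC modnMDl modn_small. Qed.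

Lemma encK2 x i : x < MM -> enc x i %/ MM = i.
Proof.
move=> xM; rewrite /enc addnC mulnC divnMDl ?(leq_ltn_trans _ xM) //.
by rewrite divn_small // addn0.
Qed.

Lemma enc_lt x i : x < MM -> i < NN -> enc x i < MM * NN.
Proof.
move=> xM iN; rewrite /enc; apply: (@leq_trans (MM * i.+1)).
  by rewrite mulnS ltn_add2r.
by rewrite leq_mul2l iN orbT.
Qed.

Lemma enc_inj x i x' i' : x < MM -> x' < MM ->
  (enc x i == enc x' i') = (x == x') && (i == i').
Proof.
move=> xM xM'; apply/eqP/andP => [E|[/eqP -> /eqP ->]] //.
split; apply/eqP.
  by rewrite -(encK1 i xM) E encK1.
by rewrite -(encK2 i xM) E encK2.
Qed.

Lemma count_DD p u :
  count_mem u (DD p) = (u \in allseqs (ar p) (iota 0 (MM * NN))) * mul p u.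
Proof. by rewrite /DD count_flatten_nseq // uniq_allseqs // iota_uniq. Qed.

Lemma DD_wf : wf_instance ar DD.
Proof.
move=> p; apply/allP => u; rewrite /DD => /flattenP [l /mapP [w wL ->]].
by move/nseqP => [-> _]; move: wL; rewrite mem_allseqs => /andP [].
Qed.

Lemma DD_set : set_valued_on P DD.
Proof.
move=> p pP; apply: count_mem_uniq => u.
have le1 : count_mem u (DD p) <= 1.
  rewrite count_DD; apply: (@leq_trans (mul p u)); first by case: (_ \in _); rewrite ?mul1n ?mul0n.
  by rewrite /mul /wm /= pP; case: ifP.
case: (boolP (u \in DD p)) => H /=; last by apply/count_memPn.
move: le1; case E: (count_mem u (DD p)) => [|[|]] // _.
by move/count_memPn: E; rewrite H.
Qed.


Lemma if_mul (b : bool) x : (if b then x else 0) = b * x.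
Proof. by case: b; rewrite ?mul1n. Qed.

Lemma all_and (T : Type) (p q : pred T) (s : seq T) :
  all (fun a => p a && q a) s = all p s && all q s.
Proof. by elim: s => [|a s IH] //=; rewrite IH andbACA. Qed.

Definition condh (Q : cq Sym) (h : nat -> nat) :=
  (map h (qhead Q) == hd2) && all (fun a => rename h a \in B2) (qbody Q).

Lemma head_enc (hd l2 : seq nat) h i : (forall y, y \in hd -> h y < MM) -> all (fun x => x < MM) l2 ->
  (map (fun y => enc (h y) (i y)) hd == map (enc^~ 0) l2) =
  (map h hd == l2) && all (fun y => i y == 0) hd.
Proof.
elim: hd l2 => [|y hd IH] [|x l2] //= Hh /andP [xM aM].
rewrite !eqseq_cons enc_inj ?Hh ?mem_head // IH //; last by move=> z zh; apply: Hh; rewrite inE zh orbT.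
by case: (h y == x); case: (i y == 0); case: (map h hd == l2); case: all.
Qed.

Lemma atom_enc (a : atom Sym) h i : size (aargs a) = ar (asym a) ->
  (forall y, y \in aargs a -> h y < MM /\ i y < NN) ->
  count_mem (map (fun y => enc (h y) (i y)) (aargs a)) (DD (asym a)) =
  ((rename h a \in B2) && all (fun y => i y < nn (h y)) (aargs a)) * wm (rename h a).
Proof.
move=> sa Hy; rewrite count_DD.
have -> : map (fun y => enc (h y) (i y)) (aargs a) \in allseqs (ar (asym a)) (iota 0 (MM * NN)).
  rewrite mem_allseqs size_map sa eqxx andTb all_map; apply/allP => y ya.
  case: (Hy y ya) => hM iN; change (enc (h y) (i y) \in iota 0 (MM * NN)).
  by rewrite mem_iota add0n enc_lt.
rewrite mul1n /mul.
have -> : map (modn^~ MM) (map (fun y => enc (h y) (i y)) (aargs a)) = map h (aargs a).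
  by rewrite -map_comp; apply/eq_in_map => y ya /=; rewrite encK1 //; case: (Hy y ya).
have -> : all (fun c => c %/ MM < nn (c %% MM)) (map (fun y => enc (h y) (i y)) (aargs a)) =
          all (fun y => i y < nn (h y)) (aargs a).
  by rewrite all_map; apply: eq_in_all => y ya /=; case: (Hy y ya) => hM _; rewrite encK1 // encK2.
by rewrite if_mul.
Qed.

Lemma point (Q : cq Sym) h i :
  all (fun a => size (aargs a) == ar (asym a)) (qbody Q) ->
  {subset qhead Q <= body_vars Q} -> all (fun x => x < MM) hd2 ->
  (forall y, y \in body_vars Q -> h y < MM /\ i y < NN) ->
  (map (fun y => enc (h y) (i y)) (qhead Q) == t2) * weight DD Q (fun y => enc (h y) (i y)) =
  condh Q h * ((\prod_(a <- qbody Q) wm (rename h a)) *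
     \prod_(y <- body_vars Q) ((i y < nn (h y)) && ((y \in qhead Q) ==> (i y == 0)) : nat)).
Proof.
move=> ar_ok hdV hd2M Hy.
rewrite /t2 head_enc //; last by move=> y /hdV /Hy [].
have W : weight DD Q (fun y => enc (h y) (i y)) =
   (all (fun a => rename h a \in B2) (qbody Q) && all (fun y => i y < nn (h y)) (body_vars Q)) *
   \prod_(a <- qbody Q) wm (rename h a).
  rewrite /weight (eq_big_seq (fun a => ((rename h a \in B2) &&
      all (fun y => i y < nn (h y)) (aargs a) : nat) * wm (rename h a))); last first.
    move=> a aB; apply: atom_enc; first by apply/eqP; apply: (allP ar_ok).
    by move=> y ya; apply: Hy; rewrite in_body_vars; apply/hasP; exists a.
  by rewrite big_split /= prod_bool all_and all_body.
rewrite W prod_bool all_and.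
have -> : all (fun y => (y \in qhead Q) ==> (i y == 0)) (body_vars Q) = all (fun y => i y == 0) (qhead Q).
  apply/allP/allP => H y yh; first by have := H y (hdV y yh); rewrite yh.
  by apply/implyP => /H.
rewrite /condh.
by case: (map h _ == _); case: (all (fun y => i y == 0) _); case: (all (fun a => _ \in B2) _);
   case: (all (fun y => i y < _) _); rewrite /= ?mul0n ?muln0 ?mul1n ?muln1.
Qed.

Lemma bag_DD (Q : cq Sym) :
  all (fun a => size (aargs a) == ar (asym a)) (qbody Q) ->
  {subset qhead Q <= body_vars Q} -> all (fun x => x < MM) hd2 ->
  all (fun x => 0 < x) vs ->
  bag_mult Q DD t2 =
  \sum_(s <- allseqs (size (body_vars Q)) (iota 0 MM) | condh Q (asg (body_vars Q) s))
    (\prod_(a <- qbody Q) wm (rename (asg (body_vars Q) s) a)) *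
    \prod_(y <- body_vars Q) (if y \in qhead Q then 1 else nn (asg (body_vars Q) s y)).
Proof.
move=> ar_ok hdV hd2M vpos.
rewrite bag_SS -(@SS_sub (adom DD Q) (iota 0 (MM * NN))) ?undup_uniq ?iota_uniq //; first last.
- by move=> g Hg; rewrite weight_vanish ?muln0.
- move=> x; rewrite /adom mem_undup => /flattenP [u /flattenP [l /mapP [a aB ->]]].
  rewrite /DD => /flattenP [l' /mapP [w wA ->]] /nseqP [-> _] xw.
  by move: wA; rewrite mem_allseqs => /andP [_ /allP]; apply.
rewrite SS_enc -SS_allseqs [RHS]big_mkcond /=; apply: eq_big_seq => s sA.
set h := asg (body_vars Q) s.
have hM : forall y, y \in body_vars Q -> h y < MM.
  move=> y yV; move: sA; rewrite mem_allseqs => /andP [/eqP ss /allP sA].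
  have : h y \in iota 0 MM by apply: sA; apply: mem_nth; rewrite ss index_mem.
  by rewrite mem_iota.
rewrite (@SS_ext _ _ _ (fun i => condh Q h * ((\prod_(a <- qbody Q) wm (rename h a)) *
     \prod_(y <- body_vars Q) ((i y < nn (h y)) && ((y \in qhead Q) ==> (i y == 0)) : nat)))); last first.
  move=> i Hi; apply: point => // y yV; split; first exact: hM.
  have : i y \in iota 0 NN by exact: (allP Hi y yV).
  by rewrite mem_iota.
rewrite !SS_scale (SS_prod _ (fun y j => ((j < nn (h y)) && ((y \in qhead Q) ==> (j == 0)) : nat))) ?undup_uniq //.
case: (condh Q h); rewrite ?mul0n ?mul1n //; congr (_ * _); apply: eq_bigr => y _.
rewrite -[0 :: iota 1 (sumn vs)]/(iota 0 NN).
case: (y \in qhead Q).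
  rewrite (eq_bigr (fun j => (j == 0) : nat)) ?sum_eq0 //.
  by move=> j _; rewrite implyTb; case: (eqVneq j 0) => [->|]; rewrite ?andbF ?andbT // nth1_pos.
under eq_bigr => j _ do rewrite implyFb andbT.
by rewrite sum_lt // nn_le.
Qed.

End Construct.

Lemma mon_cat l1 l2 e1 e2 : size l1 = size e1 ->
  mon (l1 ++ l2) (e1 ++ e2) = mon l1 e1 * mon l2 e2.
Proof.
elim: l1 e1 => [|x l1 IH] [|j e1] //=; first by rewrite mul1n.
by move=> [s]; rewrite IH // mulnA.
Qed.

Lemma mon_map (T : Type) (f g : T -> nat) (L : seq T) :
  mon (map f L) (map g L) = \prod_(x <- L) f x ^ g x.
Proof. by elim: L => [|x L IH]; rewrite ?big_nil ?big_cons //= IH. Qed.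

Lemma map_index_iota (T : eqType) (s : seq T) : uniq s -> map (index^~ s) s = iota 0 (size s).
Proof.
move=> us; apply: (@eq_from_nth _ 0); first by rewrite size_map size_iota.
move=> i; rewrite size_map => i_s.
case: s us i_s => [|x0 s'] // us i_s.
by rewrite (nth_map x0) // nth_iota // add0n index_uniq.
Qed.

Section Mon.
Variable Sym : eqType.
Variable ar : Sym -> nat.
Variable P : seq Sym.
Variable R2 : cq Sym.

Definition NHq (Q : cq Sym) := [seq y <- body_vars Q | y \notin qhead Q].
Definition NPq (Q : cq Sym) := [seq a <- qbody Q | asym a \notin P].

Definition eh (Q : cq Sym) (h : nat -> nat) : seq nat :=
  [seq count (fun y => h y == x) (NHq Q) | x <- V2 R2] ++
  [seq count (fun a => rename h a == b) (NPq Q) | b <- A2 P R2].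

Definition LL (Q : cq Sym) :=
  [seq eh Q (asg (body_vars Q) s) | s <- allseqs (size (body_vars Q)) (iota 0 (MM R2))
     & condh R2 Q (asg (body_vars Q) s)].

Lemma vs_split (vs : seq nat) : size vs = size (V2 R2) + size (A2 P R2) ->
  vs = map (nn R2 vs) (V2 R2) ++ map (mm P R2 vs) (A2 P R2).
Proof.
move=> svs.
have -> : map (nn R2 vs) (V2 R2) = take (size (V2 R2)) vs.
  have -> : map (nn R2 vs) (V2 R2) = map (nth 1 vs) (map (index^~ (V2 R2)) (V2 R2)) by rewrite -map_comp.
  rewrite map_index_iota ?undup_uniq //.
  by rewrite map_nth_iota0 // svs leq_addr.
have -> : map (mm P R2 vs) (A2 P R2) = drop (size (V2 R2)) vs.
  have -> : map (mm P R2 vs) (A2 P R2) =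
     map (nth 1 vs) (map (addn (size (V2 R2))) (map (index^~ (A2 P R2)) (A2 P R2))) by rewrite -!map_comp.
  rewrite map_index_iota ?undup_uniq // -iotaDl addn0 map_nth_iota; last by rewrite svs addKn.
  by rewrite take_oversize // size_drop svs addKn.
by rewrite cat_take_drop.
Qed.

Lemma hom_vars (Q : cq Sym) h : condh R2 Q h -> forall y, y \in body_vars Q -> h y \in V2 R2.
Proof.
move=> /andP [_ /allP hom] y; rewrite in_body_vars => /hasP [a aB ya].
rewrite /V2 in_body_vars; apply/hasP; exists (rename h a); first exact: hom.
exact: map_f.
Qed.

Lemma bag_mon (Q : cq Sym) (vs : seq nat) :
  all (fun a => size (aargs a) == ar (asym a)) (qbody Q) ->
  {subset qhead Q <= body_vars Q} -> all (fun x => x < MM R2) (hd2 R2) ->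
  all (fun x => 0 < x) vs -> size vs = size (V2 R2) + size (A2 P R2) ->
  bag_mult Q (DD ar P R2 vs) (t2 R2) = \sum_(e <- LL Q) mon vs e.
Proof.
move=> ar_ok hdV hd2M vpos svs.
rewrite bag_DD // /LL big_map big_filter; apply: eq_bigr => s cond.
set h := asg (body_vars Q) s.
rewrite {3}(vs_split svs) /eh mon_cat ?size_map // !mon_map mulnC.
congr (_ * _).
  rewrite -prod_regroup ?undup_uniq //; last first.
    by move=> y; rewrite /NHq mem_filter => /andP [_ yV]; apply: (hom_vars cond).
  rewrite /NHq big_filter [RHS]big_mkcond; apply: eq_bigr => y _.
  by case: (y \in qhead Q).
rewrite -prod_regroup ?undup_uniq //; last first.
  move=> a; rewrite /NPq mem_filter => /andP [aP aB].
  rewrite /A2 mem_undup /NP2 mem_filter /=  aP /=.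
  by case/andP: cond => _ /allP; apply.
rewrite /NPq big_filter [RHS]big_mkcond; apply: eq_bigr => a _.
by rewrite /wm /=; case: (asym a \in P).
Qed.

End Mon.

Section Hom.
Variable Sym : eqType.
Variable ar : Sym -> nat.
Variable P : seq Sym.

Lemma asg_id (V : seq nat) y : y \in V -> asg V V y = y.
Proof. by move=> yV; rewrite /asg nth_index. Qed.

Lemma rename_id_body (Q : cq Sym) a : a \in qbody Q -> rename (asg (body_vars Q) (body_vars Q)) a = a.
Proof.
move=> aB; case: a aB => p l aB; rewrite /rename /=; congr pair.
rewrite -[RHS]map_id; apply/eq_in_map => y yl; apply: asg_id.
by rewrite in_body_vars; apply/hasP; exists (p, l).
Qed.

Lemma HOM (R1 R2 : cq Sym) :
  all (fun a => size (aargs a) == ar (asym a)) (qbody R1) ->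
  all (fun a => size (aargs a) == ar (asym a)) (qbody R2) ->
  {subset qhead R1 <= body_vars R1} -> {subset qhead R2 <= body_vars R2} ->
  (forall D : instance Sym, wf_instance ar D -> set_valued_on P D ->
     forall t, bag_mult R1 D t = bag_mult R2 D t) ->
  exists h, [/\ condh R2 R1 h,
    (forall x, x \in V2 R2 -> count (fun y => h y == x) (NHq R1) = count_mem x (NHq R2)) &
    (forall b, b \in A2 P R2 -> count (fun a => rename h a == b) (NPq P R1) = count_mem b (NPq P R2))].
Proof.
move=> ar1 ar2 hd1 hd2' EQ.
set k := size (V2 R2) + size (A2 P R2).
have szL : forall Q, all (fun e => size e == k) (LL P R2 Q).
  move=> Q; apply/allP => e /mapP [s _ ->].
  by rewrite /eh size_cat !size_map.
have hd2M : all (fun x => x < MM R2) (hd2 R2).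
  by apply/allP => x /hd2' xV; apply: lt_MM.
have cnt := poly_count (szL R1) (szL R2).
have g := asg (body_vars R2) (body_vars R2).
set e0 := eh P R2 R2 (asg (body_vars R2) (body_vars R2)).
have condR2 : condh R2 R2 (asg (body_vars R2) (body_vars R2)).
  apply/andP; split.
    apply/eqP; rewrite -[RHS]map_id; apply/eq_in_map => y yh; apply: asg_id; exact: hd2'.
  by apply/allP => a aB; rewrite rename_id_body.
have e0in : e0 \in LL P R2 R2.
  apply/mapP; exists (body_vars R2) => //; rewrite mem_filter condR2 /= mem_allseqs eqxx /=.
  by apply/allP => x xV; change (x \in iota 0 (MM R2)); rewrite mem_iota add0n lt_MM.
have : e0 \in LL P R2 R1.
  have H : forall vs, size vs = k -> all (fun x => 0 < x) vs ->
      \sum_(e <- LL P R2 R1) mon vs e = \sum_(e <- LL P R2 R2) mon vs e.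
    move=> vs svs vpos; rewrite -(@bag_mon _ ar) // -(@bag_mon _ ar) //.
    apply: EQ; [exact: DD_wf | exact: DD_set].
  by rewrite -has_pred1 has_count (cnt H e0) -has_count has_pred1.
case/mapP => s; rewrite mem_filter => /andP [cond _] E.
exists (asg (body_vars R1) s); split => //.
  move: E; rewrite /e0 /eh => /eqP; rewrite eqseq_cat ?size_map // => /andP [/eqP E _].
  move=> x xV; have := congr1 (fun l => nth 0 l (index x (V2 R2))) E.
  rewrite !(nth_map x) ?index_mem // nth_index // => <-.
  apply: eq_in_count => y; rewrite /NHq mem_filter => /andP [_ yV] /=.
  by rewrite asg_id.
move: E; rewrite /e0 /eh => /eqP; rewrite eqseq_cat ?size_map // => /andP [_ /eqP E].
move=> b bA; have := congr1 (fun l => nth 0 l (index b (A2 P R2))) E.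
rewrite !(nth_map b) ?index_mem // nth_index // => <-.
apply: eq_in_count => a; rewrite /NPq mem_filter => /andP [_ aB] /=.
by rewrite rename_id_body.
Qed.

End Hom.

Definition tp (a b z : nat) := if z == a then b else if z == b then a else z.

Lemma tpK a b : cancel (tp a b) (tp a b).
Proof.
move=> z; rewrite /tp.
case: (eqVneq z a) => [->|za].
  by rewrite eqxx; case: (eqVneq b a) => [->|ba] //; rewrite eqxx.
case: (eqVneq z b) => [->|zb]; first by rewrite eqxx.
by rewrite (negbTE za) (negbTE zb).
Qed.

Lemma ext_bij (xs ys : seq nat) : uniq xs -> uniq ys -> size xs = size ys ->
  exists f, bijective f /\ map f xs = ys.
Proof.
elim: xs ys => [|x xs IH] [|y ys] //=.
  by move=> _ _ _; exists id; split=> //; exists id.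
move=> /andP [xxs uxs] /andP [yys uys] [sz].
case: (IH ys uxs uys sz) => f' [bf' E].
exists (tp y (f' x) \o f'); split.
  by apply: bij_comp => //; exists (tp y (f' x)); apply: tpK.
rewrite /= /tp eqxx; congr cons; first by case: eqP.
rewrite -E; apply/eq_in_map => z zxs /=.
have zy : f' z != y.
  by apply: contraNneq yys => <-; rewrite -E map_f.
have zx : f' z != f' x.
  apply: contraNneq xxs => /(bij_inj bf') <-; exact: zxs.
by rewrite (negbTE zy) (negbTE zx).
Qed.

Lemma size_undup_map (T U : eqType) (f : T -> U) (s : seq T) :
  size (undup (map f s)) <= size (undup s).
Proof.
rewrite -(size_map f); apply: uniq_leq_size; first exact: undup_uniq.
move=> x; rewrite mem_undup => /mapP [y ys ->]; apply: map_f; by rewrite mem_undup.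
Qed.

Lemma mem_map_undup (T U : eqType) (f : T -> U) (s : seq T) :
  map f (undup s) =i map f s.
Proof.
move=> x; apply/mapP/mapP => [[y]|[y]]; rewrite ?mem_undup => ys ->; exists y => //.
by rewrite mem_undup.
Qed.

Section Iso.
Variable Sym : eqType.
Variable P : seq Sym.
Variables R1 R2 : cq Sym.
Hypothesis hd1 : {subset qhead R1 <= body_vars R1}.
Hypothesis hd2' : {subset qhead R2 <= body_vars R2}.
Variable h1 : nat -> nat.
Hypothesis cond1 : condh R2 R1 h1.
Hypothesis cntV : forall x, x \in V2 R2 -> count (fun y => h1 y == x) (NHq R1) = count_mem x (NHq R2).
Hypothesis cntA : forall b, b \in A2 P R2 ->
  count (fun a => rename h1 a == b) (NPq P R1) = count_mem b (NPq P R2).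

Lemma head_map : map h1 (qhead R1) = qhead R2.
Proof. by case/andP: cond1 => /eqP. Qed.

Lemma half_heads : size (undup (qhead R2)) <= size (undup (qhead R1)).
Proof. by rewrite -head_map size_undup_map. Qed.

Lemma perm_NH : perm_eq (map h1 (NHq R1)) (NHq R2).
Proof.
apply: perm_from_count => x; rewrite count_map.
case: (boolP (x \in V2 R2)) => xV; first exact: cntV.
have -> : count_mem x (NHq R2) = 0.
  by apply/count_memPn; apply: contra xV; rewrite /NHq mem_filter => /andP [].
rewrite (eq_in_count (a2 := pred0)) ?count_pred0 // => y.
rewrite /NHq mem_filter => /andP [_ yV] /=; apply/negbTE.
by apply: contraNneq xV => <-; apply: (hom_vars cond1).
Qed.

Lemma perm_NP : perm_eq (map (rename h1) (NPq P R1)) (NPq P R2).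
Proof.
apply: perm_from_count => b; rewrite count_map.
case: (boolP (b \in A2 P R2)) => bA; first exact: cntA.
have -> : count_mem b (NPq P R2) = 0.
  by apply/count_memPn; apply: contra bA; rewrite /A2 mem_undup.
rewrite (eq_in_count (a2 := pred0)) ?count_pred0 // => a.
rewrite /NPq mem_filter => /andP [aP aB] /=; apply/negbTE.
apply: contraNneq bA => <-; rewrite /A2 mem_undup /NP2 mem_filter /= aP /=.
by case/andP: cond1 => _ /allP; apply.
Qed.

Hypothesis heads_le : size (undup (qhead R1)) <= size (undup (qhead R2)).

Lemma half_bij : exists f, bijective f /\ {in body_vars R1, f =1 h1}.
Proof.
have uNH1 : uniq (NHq R1) by rewrite filter_uniq // undup_uniq.
have uNH2 : uniq (NHq R2) by rewrite filter_uniq // undup_uniq.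
have uW1 : uniq (undup (qhead R1) ++ NHq R1).
  rewrite cat_uniq undup_uniq uNH1 andbT /=; apply/hasPn => y.
  by rewrite /NHq mem_filter => /andP [yh _]; rewrite mem_undup.
have uMU1 : uniq (map h1 (undup (qhead R1))).
  have e : undup (qhead R2) =i map h1 (undup (qhead R1)).
    by move=> x; rewrite mem_map_undup head_map mem_undup.
  rewrite (uniq_size_uniq (undup_uniq _) e) size_map; apply/eqP/anti_leq.
  by rewrite half_heads heads_le.
have uMW1 : uniq (map h1 (undup (qhead R1) ++ NHq R1)).
  rewrite map_cat cat_uniq uMU1 (perm_uniq perm_NH) uNH2 andbT /=.
  apply/hasPn => x; rewrite (perm_mem perm_NH) /NHq mem_filter => /andP [xh _].
  by apply: contra xh; rewrite mem_map_undup head_map.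
have [f [bf E]] := ext_bij uW1 uMW1 (esym (size_map _ _)).
exists f; split => // y yV; move/eq_in_map: E; apply.
rewrite mem_cat mem_undup /NHq mem_filter yV andbT.
by case: (y \in qhead R1).
Qed.

Lemma rename_in (f : nat -> nat) : {in body_vars R1, f =1 h1} ->
  {in qbody R1, rename f =1 rename h1}.
Proof.
move=> fh a aB; rewrite /rename; congr pair; apply/eq_in_map => y ya.
by apply: fh; rewrite in_body_vars; apply/hasP; exists a.
Qed.

Definition PPq (Q : cq Sym) := [seq a <- qbody Q | asym a \in P].

Lemma rename_inj (f : nat -> nat) : bijective f -> injective (@rename Sym f).
Proof.
move=> bf [p l] [p' l'] [-> E]; congr pair; exact: (inj_map (bij_inj bf) E).
Qed.

Lemma half_PP : uniq (PPq R1) -> size (PPq R1) <= size (PPq R2).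
Proof.
move=> uP; have [f [bf fh]] := half_bij.
rewrite -(size_map (rename f)); apply: uniq_leq_size.
  by rewrite map_inj_uniq //; apply: rename_inj.
move=> b /mapP [a]; rewrite /PPq mem_filter => /andP [aP aB] ->.
rewrite mem_filter (rename_in fh) //= aP /=.
by case/andP: cond1 => _ /allP; apply.
Qed.

Hypothesis PP_le : size (PPq R2) <= size (PPq R1).
Hypothesis uPP1 : uniq (PPq R1).
Hypothesis uPP2 : uniq (PPq R2).

Lemma iso_final : cq_iso R1 R2.
Proof.
have [f [bf fh]] := half_bij.
exists f; split => //.
  rewrite -head_map; apply/eq_in_map => y yh; apply: fh; exact: hd1.
have split_perm : forall Q : cq Sym, perm_eq (qbody Q) (PPq Q ++ NPq P Q).
  move=> Q; rewrite perm_sym /PPq /NPq.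
  apply/permPl; exact: (perm_filterC (fun a : atom Sym => asym a \in P)).
rewrite (perm_trans (perm_map _ (split_perm R1))) // map_cat perm_sym.
rewrite (perm_trans (split_perm R2)) // perm_sym; apply: perm_cat.
  apply: uniq_perm => //; first by rewrite map_inj_uniq //; apply: rename_inj.
  have sub : {subset map (rename f) (PPq R1) <= PPq R2}.
    move=> b /mapP [a]; rewrite /PPq mem_filter => /andP [aP aB] ->.
    rewrite mem_filter (rename_in fh) //= aP /=.
    by case/andP: cond1 => _ /allP; apply.
  have uM : uniq (map (rename f) (PPq R1)) by rewrite map_inj_uniq //; apply: rename_inj.
  have sz : size (PPq R2) <= size (map (rename f) (PPq R1)) by rewrite size_map.
  have [_ e] := uniq_min_size uM sub sz.
  exact: e.
rewrite (_ : map (rename f) (NPq P R1) = map (rename h1) (NPq P R1)); first exact: perm_NP.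
by apply/eq_in_map => a; rewrite /NPq mem_filter => /andP [_ aB]; apply: rename_in.
Qed.

End Iso.

Lemma SS_eqdom A B V G : uniq A -> uniq B -> A =i B -> SS A V G = SS B V G.
Proof.
move=> uA uB AB; elim: V G => [|v V IH] G //=.
rewrite (perm_big _ (uniq_perm uA uB AB)); apply: eq_bigr => x _; exact: IH.
Qed.

Section Final.
Variable Sym : eqType.
Variable ar : Sym -> nat.
Variable P : seq Sym.

Lemma mem_dedup (b : seq (atom Sym)) a : (a \in dedup_on P b) = (a \in b).
Proof.
elim: b => [|a0 b IH] //=.
case: ifP => [/andP [_ a0b]|_]; rewrite ?inE IH //.
by case: (eqVneq a a0) => [->|].
Qed.

Lemma uniq_PP_dedup (b : seq (atom Sym)) : uniq [seq a <- dedup_on P b | asym a \in P].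
Proof.
elim: b => [|a0 b IH] //=.
case: ifP => // H /=; case: ifP => //= aP; rewrite IH andbT mem_filter aP /= mem_dedup.
by move: H; rewrite aP /= => /negbT.
Qed.

Lemma prod_dedup (b : seq (atom Sym)) (c : atom Sym -> nat) :
  (forall a, asym a \in P -> c a <= 1) ->
  \prod_(a <- b) c a = \prod_(a <- dedup_on P b) c a.
Proof.
move=> c1; elim: b => [|a0 b IH] //=.
case: ifP => [/andP [aP a0b]|_]; rewrite big_cons ?big_cons IH //.
rewrite -IH (big_rem a0 a0b) mulnA.
by have := c1 a0 aP; case: (c a0) => [|[|]].
Qed.

Lemma mem_adom (D : instance Sym) (Q : cq Sym) x :
  (x \in adom D Q) = has (fun a => x \in flatten (D (asym a))) (qbody Q).
Proof.
rewrite /adom mem_undup; apply/flattenP/hasP.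
  by case=> l /flattenP [L /mapP [a aB ->] lD] xl; exists a => //; apply/flattenP; exists l.
case=> a aB /flattenP [l lD xl]; exists l => //; apply/flattenP; exists (D (asym a)) => //.
exact: map_f.
Qed.

Lemma bag_dedup (Q : cq Sym) D t : set_valued_on P D ->
  bag_mult Q D t = bag_mult (dedup_cq P Q) D t.
Proof.
move=> sv; rewrite !bag_SS.
rewrite (@SS_eqdom (adom D Q) (adom D (dedup_cq P Q))) ?undup_uniq //; last first.
  by move=> x; rewrite !mem_adom; apply: eq_has_r => a; rewrite /= mem_dedup.
rewrite (@SS_perm _ (body_vars Q) (body_vars (dedup_cq P Q))) ?undup_uniq //; last first.
  apply: uniq_perm; rewrite ?undup_uniq // => y.
  by rewrite !in_body_vars; apply: eq_has_r => a; rewrite /= mem_dedup.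
congr SS; apply: functional_extensionality => g; congr (_ * _).
rewrite /weight /= -prod_dedup // => a aP.
by rewrite count_uniq_mem ?sv //; case: (_ \in _).
Qed.

Lemma bag_iso (Q1 Q2 : cq Sym) D t : cq_iso Q1 Q2 -> bag_mult Q1 D t = bag_mult Q2 D t.
Proof.
case=> f [[finv fK fK'] Eh Eb]; rewrite !bag_SS.
have finj : injective f by exact: can_inj fK.
have mf : forall (s : seq nat) y, (y \in map f s) = (finv y \in s).
  by move=> s y; rewrite -{1}(fK' y) mem_map.
rewrite (@SS_perm _ (body_vars Q2) (map f (body_vars Q1))) ?undup_uniq //; last first.
  apply: uniq_perm; rewrite ?undup_uniq ?map_inj_uniq ?undup_uniq // => y.
  rewrite mf !in_body_vars -(eq_has_r (perm_mem Eb)) has_map; apply: eq_has => a /=.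
  by rewrite mf.
rewrite (SS_rename _ _ _ fK fK').
rewrite (@SS_eqdom (adom D Q2) (adom D Q1)) ?undup_uniq //; last first.
  move=> x; rewrite !mem_adom -(eq_has_r (perm_mem Eb)) has_map; by apply: eq_has.
congr SS; apply: functional_extensionality => g /=; congr (_ * _).
  by rewrite -Eh -map_comp; congr (_ == _); apply: eq_map => y /=; rewrite fK.
rewrite /weight -(perm_big _ Eb) big_map; apply: eq_bigr => a _ /=.
by rewrite -map_comp (@eq_map _ _ _ g) // => y /=; rewrite fK.
Qed.

End Final.

Unset Implicit Arguments.

Theorem theorem4p2 (Sym : eqType) (ar : Sym -> nat) (P : seq Sym)
    (Q1 Q2 : cq Sym) :
  wf_cq ar Q1 -> wf_cq ar Q2 ->
  (forall D : instance Sym, wf_instance ar D -> set_valued_on P D ->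
     forall t : seq nat, bag_mult Q1 D t = bag_mult Q2 D t)
  <-> cq_iso (dedup_cq P Q1) (dedup_cq P Q2).
Proof.
move=> [_ ar1 hd1] [_ ar2 hd2]; split; last first.
  move=> iso D wD sD t; rewrite (bag_dedup Q1 t sD) (bag_dedup Q2 t sD).
  exact: bag_iso.
move=> EQ.
have EQ' : forall D, wf_instance ar D -> set_valued_on P D -> forall t,
    bag_mult (dedup_cq P Q1) D t = bag_mult (dedup_cq P Q2) D t.
  by move=> D wD sD t; rewrite -!bag_dedup // EQ.
have EQ'' : forall D, wf_instance ar D -> set_valued_on P D -> forall t,
    bag_mult (dedup_cq P Q2) D t = bag_mult (dedup_cq P Q1) D t.
  by move=> D wD sD t; rewrite EQ'.
have arD : forall Q : cq Sym, all (fun a => size (aargs a) == ar (asym a)) (qbody Q) ->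
    all (fun a => size (aargs a) == ar (asym a)) (qbody (dedup_cq P Q)).
  by move=> Q /allP H; apply/allP => a; rewrite /= mem_dedup; exact: H.
have hdD : forall Q : cq Sym, all (fun x => x \in body_vars Q) (qhead Q) ->
    {subset qhead (dedup_cq P Q) <= body_vars (dedup_cq P Q)}.
  move=> Q /allP H y /H; rewrite !in_body_vars.
  by rewrite (eq_has_r (s2 := qbody (dedup_cq P Q))) // => a; rewrite /= mem_dedup.
have [h1 [c1 v1 a1]] := HOM (arD _ ar1) (arD _ ar2) (hdD _ hd1) (hdD _ hd2) EQ'.
have [h2 [c2 v2 a2]] := HOM (arD _ ar2) (arD _ ar1) (hdD _ hd2) (hdD _ hd1) EQ''.
have u1 : uniq (PPq P (dedup_cq P Q1)) by apply: uniq_PP_dedup.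
have u2 : uniq (PPq P (dedup_cq P Q2)) by apply: uniq_PP_dedup.
apply: (iso_final (hdD _ hd1) c1 v1 a1 (half_heads c2) _ u1 u2).
exact: (half_PP c2 v2 (half_heads c1) u2).
Qed.
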